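(* Let $\Gamma$ be a metric graph and let $F$ be a subbundle of a vector bundle $E$ on $\Gamma$. Then there exists another subbundle $H$ of $E$ such that $E\simeq F\oplus H$.
   Context: A vector bundle of rank $n$ on a metric graph $\Gamma$ is a torsor under the sheaf of groups $S_n\ltimes\mathcal{H}_\Gamma^n$, where $\mathcal{H}_\Gamma$ is the sheaf of harmonic functions (piecewise linear with integer slopes and zero Laplacian) and $S_n$ permutes factors. With respect to an oriented simple model of $\Gamma$ and its star cover, it is described by transition matrices $g^e$ on the edges $e$ with entries in $\mathbb{T}=\mathbb{R}\cup\{\infty\}$ having exactly one finite entry in each row and column, the finite entries being affine functions with integer slope on $e$; two bundles are isomorphic iff their transition data are cohomologous. The direct sum $E\oplus F$ has block-diagonal transition matrices $\begin{bmatrix} g^e&\infty\\ \infty& h^e\end{bmatrix}$. A rank-$m$ bundle $F$ ($m\le n$) is a subbundle of the rank-$n$ bundle $E$ if transition matrices $h^e$ of $F$ and $g^e$ of $E$ can be chosen with $g^e=\begin{bmatrix} h^e&\ast\\ \infty&\ast\end{bmatrix}$ for all edges $e$. *)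

(* Defs.v *)
From Stdlib Require Import Reals.
From mathcomp Require Import all_boot fingroup perm.

Set Implicit Arguments.
Unset Strict Implicit.
Unset Printing Implicit Defensive.

Local Open Scope R_scope.

(* Oriented model of a (compact) metric graph: finite vertex and edge
   sets, every edge oriented from its tail to its head, with a length.  *)
Record model := Model {
  vert : finType;
  edge : finType;
  tl : edge -> vert;
  hd : edge -> vert;
  len : edge -> R }.

Definition simple_model (G : model) : Prop :=
  (forall e : edge G, tl e <> hd e) /\
  (forall e e' : edge G,
      (tl e = tl e' /\ hd e = hd e') \/ (tl e = hd e' /\ hd e = tl e') ->
      e = e') /\
  (forall e : edge G, (0 < len e)).

(* Points of the (open) edge e are parametrized by t in (0, len e),
   t = distance from the tail of e. *)
Definition interior (G : model) (e : edge G) (t : R) : Prop :=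
  (0 < t /\ t < len e).

(* Tropical numbers T = R u {oo}: None stands for oo.                  *)
Definition trop := option R.

Definition tadd (x y : trop) : trop :=
  match x, y with Some a, Some b => Some (a + b) | _, _ => None end.

Definition tmin (x y : trop) : trop :=
  match x, y with
  | None, _ => y
  | _, None => x
  | Some a, Some b => Some (Rmin a b)
  end.

(* An n x n matrix whose entries are T-valued functions on an edge
   (the argument t is the coordinate on the edge). *)
Definition tmat (n : nat) := 'I_n -> 'I_n -> R -> trop.

Definition tmul n (A B : tmat n) : tmat n :=
  fun i j t => \big[tmin/None]_(k < n) tadd (A i k t) (B k j t).

Definition entry_fin (G : model) (e : edge G) (x : R -> trop) : Prop :=
  exists (a : R) (s : Z), forall t, interior e t -> x t = Some (a + IZR s * t).

Definition entry_inf (G : model) (e : edge G) (x : R -> trop) : Prop :=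
  forall t, interior e t -> x t = None.

Definition trans_mx (G : model) n (e : edge G) (A : tmat n) : Prop :=
  (forall i j, entry_fin e (A i j) \/ entry_inf e (A i j)) /\
  (forall i, exists! j, entry_fin e (A i j)) /\
  (forall j, exists! i, entry_fin e (A i j)).

(* Transition data of a rank n vector bundle w.r.t. the star cover of
   the model: one matrix per edge (triple overlaps of stars are empty
   in a simple model, so there is no cocycle condition). *)
Definition tdata (G : model) n := edge G -> tmat n.

Definition bundle (G : model) n (g : tdata G n) : Prop :=
  forall e, trans_mx e (g e).

(* Sections of S_n |x H^n over the open star U_v of a vertex v.
   U_v is connected, so the S_n-part is one permutation pi; a harmonic
   function on U_v is given by its value c at v and its outgoing integer
   slopes s e along the incident edges e, with zero Laplacian at v
   (sum of outgoing slopes = 0).                                        *)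
Definition incident (G : model) (v : vert G) (e : edge G) : bool :=
  (tl e == v) || (hd e == v).

Definition harmonic_at (G : model) (v : vert G) (s : edge G -> Z) : Prop :=
  \big[Z.add/0%Z]_(e | incident v e) s e = 0%Z.

(* Value at the point t of the edge e (incident to v) of the harmonic
   function on U_v with value c at v and outgoing slope sl along e. *)
Definition hval (G : model) (v : vert G) (e : edge G) (c : R) (sl : Z) (t : R) : R :=
  if tl e == v then (c + IZR sl * t) else (c + IZR sl * (len e - t)).

(* Matrix of the restriction to the edge e of the star section
   (pi, (c_i, s_i)_i) at v, and of its inverse.                        *)
Definition star_mx (G : model) n (v : vert G) (pi : {perm 'I_n})
    (c : 'I_n -> R) (s : 'I_n -> edge G -> Z) (e : edge G) : tmat n :=
  fun i j t => if pi i == j then Some (hval v e (c i) (s i e) t) else None.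

Definition star_inv_mx (G : model) n (v : vert G) (pi : {perm 'I_n})
    (c : 'I_n -> R) (s : 'I_n -> edge G -> Z) (e : edge G) : tmat n :=
  fun j i t => if pi i == j then Some (- hval v e (c i) (s i e) t) else None.

(* Two transition data are cohomologous (= the bundles are isomorphic):
   g' e = h_{hd e} (.) g e (.) h_{tl e}^{-1} on every edge e, for some
   sections h_v of S_n |x H^n over the stars U_v.                       *)
Definition cohom (G : model) n (g g' : tdata G n) : Prop :=
  exists (pi : vert G -> {perm 'I_n}) (c : vert G -> 'I_n -> R)
         (s : vert G -> 'I_n -> edge G -> Z),
    (forall v i, harmonic_at v (s v i)) /\
    (forall e i j t, interior e t ->
       g' e i j t =
       tmul (tmul (star_mx (hd e) (pi (hd e)) (c (hd e)) (s (hd e)) e) (g e))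
            (star_inv_mx (tl e) (pi (tl e)) (c (tl e)) (s (tl e)) e) i j t).

Definition dsum (G : model) m k (g : tdata G m) (h : tdata G k) : tdata G (m + k)%N :=
  fun e i j t =>
    match split i, split j with
    | inl i', inl j' => g e i' j' t
    | inr i', inr j' => h e i' j' t
    | _, _ => None
    end.

(* F (rank m) is a subbundle of E (rank n), m <= n: transition matrices
   h of F and g of E can be chosen with g = [[h, *],[oo, *]] on every
   edge, i.e. the top-left m x m block of g is h and the bottom-left
   (n - m) x m block is oo.  Blocks are described through the values of
   the ordinal indices. *)
Definition subbundle (G : model) m n (F : tdata G m) (E : tdata G n) : Prop :=
  (m <= n)%N /\
  exists (F' : tdata G m) (E' : tdata G n),
    cohom F F' /\ cohom E E' /\
    forall e t, interior e t ->
      (forall (i j : 'I_n) (i' j' : 'I_m),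
          nat_of_ord i = nat_of_ord i' -> nat_of_ord j = nat_of_ord j' ->
          E' e i j t = F' e i' j' t) /\
      (forall i j : 'I_n, (m <= i)%N -> (j < m)%N -> E' e i j t = None).

(* Main.v *)
Require Import Defs.
From Stdlib Require Import Reals ZArith Lra Lia.
From Stdlib Require Import IndefiniteDescription.
From HB Require Import structures.
From mathcomp Require Import all_boot fingroup perm.
From mathcomp Require Import zify.

Set Implicit Arguments.
Unset Strict Implicit.
Unset Printing Implicit Defensive.
Local Open Scope R_scope.

Lemma tminA : associative tmin.
Proof. by move=> [a|] [b|] [c|] //=; rewrite Rmin_assoc. Qed.
Lemma tminC : commutative tmin.
Proof. by move=> [a|] [b|] //=; rewrite Rmin_comm. Qed.
Lemma tmin0 : left_id None tmin.
Proof. by move=> [a|]. Qed.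

HB.instance Definition _ := Monoid.isComLaw.Build trop None tmin tminA tminC tmin0.

Lemma big_one n (F : 'I_n -> trop) k0 :
  (forall k, k != k0 -> F k = None) -> \big[tmin/None]_(k < n) F k = F k0.
Proof.
move=> H; rewrite (bigD1 k0) //= big1; first by case: (F k0).
by move=> k /H.
Qed.

Definition tshift (a : R) (x : trop) (b : R) : trop := tadd (tadd (Some a) x) (Some (- b)).

Lemma star_prod (G : model) n v2 pi2 c2 s2 (g : tmat n) v1 pi1 c1 s1 (e : edge G) i j t :
  tmul (tmul (star_mx v2 pi2 c2 s2 e) g) (star_inv_mx v1 pi1 c1 s1 e) i j t =
  tshift (hval v2 e (c2 i) (s2 i e) t) (g (pi2 i) (pi1 j) t) (hval v1 e (c1 j) (s1 j e) t).
Proof.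
rewrite /tmul (big_one (k0 := pi1 j)); last first.
  by move=> k Hk; rewrite /star_inv_mx eq_sym (negbTE Hk); case: (\big[_/_]_(_ < _) _).
rewrite (big_one (k0 := pi2 i)); last by move=> k Hk; rewrite /star_mx eq_sym (negbTE Hk).
by rewrite /star_mx /star_inv_mx !eqxx.
Qed.

Definition act (G : model) n (pi : vert G -> {perm 'I_n}) (c : vert G -> 'I_n -> R)
  (s : vert G -> 'I_n -> edge G -> Z) (g : tdata G n) : tdata G n :=
  fun e i j t => tshift (hval (hd e) e (c (hd e) i) (s (hd e) i e) t)
     (g e (pi (hd e) i) (pi (tl e) j) t) (hval (tl e) e (c (tl e) j) (s (tl e) j e) t).

Lemma cohomE (G : model) n (g g' : tdata G n) :
  cohom g g' <-> exists pi c s, (forall v i, harmonic_at v (s v i)) /\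
    forall e i j t, Defs.interior e t -> g' e i j t = act pi c s g e i j t.
Proof.
split; move=> [pi [c [s [Hh Heq]]]]; exists pi, c, s; split => // e i j t Ht;
  by rewrite Heq // star_prod.
Qed.

Lemma harm0 (G : model) (v : vert G) : harmonic_at v (fun _ => 0%Z).
Proof. by rewrite /harmonic_at; apply: (big_rec (fun a => a = 0%Z)) => //. Qed.

Lemma harm_opp (G : model) (v : vert G) s : harmonic_at v s -> harmonic_at v (fun e => Z.opp (s e)).
Proof.
rewrite /harmonic_at => H.
have: (\big[Z.add/0%Z]_(e | incident v e) Z.opp (s e) = Z.opp (\big[Z.add/0%Z]_(e | incident v e) s e))%Z.
  apply: (big_rec2 (fun a b => a = Z.opp b)) => //= e a b _ ->; lia.
by rewrite H.
Qed.

Lemma harm_add (G : model) (v : vert G) s1 s2 : harmonic_at v s1 -> harmonic_at v s2 ->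
  harmonic_at v (fun e => Z.add (s1 e) (s2 e)).
Proof.
rewrite /harmonic_at => H1 H2.
have: (\big[Z.add/0%Z]_(e | incident v e) Z.add (s1 e) (s2 e) =
   Z.add (\big[Z.add/0%Z]_(e | incident v e) s1 e) (\big[Z.add/0%Z]_(e | incident v e) s2 e))%Z.
  apply: (big_rec3 (fun a b c => a = Z.add b c)) => //= e a b c _ ->; lia.
by rewrite H1 H2.
Qed.

Lemma hval_add (G : model) (v : vert G) e c1 c2 s1 s2 t :
  hval v e (c1 + c2) (s1 + s2)%Z t = (hval v e c1 s1 t + hval v e c2 s2 t).
Proof. rewrite /hval; case: ifP => _; rewrite plus_IZR; ring. Qed.

Lemma hval_opp (G : model) (v : vert G) e c s t :
  hval v e (- c) (- s)%Z t = (- hval v e c s t).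
Proof. rewrite /hval; case: ifP => _; rewrite opp_IZR; ring. Qed.

Lemma hval00 (G : model) (v : vert G) e t : hval v e 0 0%Z t = 0.
Proof. rewrite /hval; case: ifP => _ /=; ring. Qed.

Lemma hval_aff (G : model) (v : vert G) e c s : exists a (sl : Z), forall t, hval v e c s t = (a + IZR sl * t).
Proof.
rewrite /hval; case: (tl e == v).
  by exists c, s.
exists (c + IZR s * len e), (- s)%Z => t; rewrite opp_IZR; ring.
Qed.


Lemma tshift0 x : tshift 0 x 0 = x.
Proof. case: x => [r|] //=; rewrite /tshift /=; f_equal; ring. Qed.

Lemma cohom_ext (G : model) n (g g1 g2 : tdata G n) : cohom g g1 ->
  (forall e i j t, Defs.interior e t -> g1 e i j t = g2 e i j t) -> cohom g g2.
Proof.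
move=> [pi [c [s [Hh Heq]]]] H; exists pi, c, s; split => // e i j t Ht.
by rewrite -H // Heq.
Qed.

Lemma cohom_perm (G : model) n (g : tdata G n) (p : {perm 'I_n}) :
  cohom g (fun e i j t => g e (p i) (p j) t).
Proof.
apply/cohomE; exists (fun _ => p), (fun _ _ => 0), (fun _ _ _ => 0%Z); split.
  by move=> v i; apply: harm0.
by move=> e i j t Ht; rewrite /act !hval00 tshift0.
Qed.

Lemma cohom_refl (G : model) n (g : tdata G n) : cohom g g.
Proof.
apply: cohom_ext (cohom_perm g 1%g) _ => e i j t _; by rewrite !perm1.
Qed.

Lemma cohom_sym (G : model) n (g g' : tdata G n) : cohom g g' -> cohom g' g.
Proof.
move/cohomE=> [pi [c [s [Hh Heq]]]]; apply/cohomE.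
exists (fun v => (pi v)^-1%g), (fun v p => - c v ((pi v)^-1%g p)),
  (fun v p e => Z.opp (s v ((pi v)^-1%g p) e)); split.
  by move=> v i; apply: harm_opp.
move=> e i j t Ht; rewrite /act Heq // /act !permKV !hval_opp.
case: (g e i j t) => [r|] //=; rewrite /tshift /=; f_equal; ring.
Qed.

Lemma cohom_trans (G : model) n (g g1 g2 : tdata G n) : cohom g g1 -> cohom g1 g2 -> cohom g g2.
Proof.
move/cohomE=> [pi1 [c1 [s1 [Hh1 Heq1]]]] /cohomE [pi2 [c2 [s2 [Hh2 Heq2]]]]; apply/cohomE.
exists (fun v => (pi2 v * pi1 v)%g), (fun v i => c2 v i + c1 v (pi2 v i)),
  (fun v i e => Z.add (s2 v i e) (s1 v (pi2 v i) e)); split.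
  by move=> v i; apply: harm_add.
move=> e i j t Ht; rewrite Heq2 // /act Heq1 // /act !permM !hval_add.
case: (g e _ _ t) => [r|] //=; rewrite /tshift /=; f_equal; ring.
Qed.

Lemma fin_inf_excl (G : model) (HG : simple_model G) (e : edge G) x :
  entry_fin e x -> entry_inf e x -> False.
Proof.
case: HG => _ [_ Hl]; have := Hl e => Hle.
move=> [a [sl Hf]] Hi.
have Ht : Defs.interior e (len e / 2) by rewrite /Defs.interior; lra.
by move: (Hf _ Ht); rewrite Hi.
Qed.

Lemma fin_ext (G : model) (e : edge G) x y :
  (forall t, Defs.interior e t -> x t = y t) -> entry_fin e x -> entry_fin e y.
Proof. move=> H [a [sl Hf]]; exists a, sl => t Ht; by rewrite -H // Hf. Qed.

Lemma inf_ext (G : model) (e : edge G) x y :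
  (forall t, Defs.interior e t -> x t = y t) -> entry_inf e x -> entry_inf e y.
Proof. move=> H Hf t Ht; by rewrite -H // Hf. Qed.

Lemma fin_shift (G : model) (e : edge G) v1 c1 s1 v2 c2 s2 x :
  entry_fin e x -> entry_fin e (fun t => tshift (hval v1 e c1 s1 t) (x t) (hval v2 e c2 s2 t)).
Proof.
move=> [a [sl Hf]].
have [a1 [sl1 H1]] := hval_aff v1 e c1 s1.
have [a2 [sl2 H2]] := hval_aff v2 e c2 s2.
exists (a1 + a - a2), (sl1 + sl - sl2)%Z => t Ht.
rewrite Hf // H1 H2 /tshift /= minus_IZR plus_IZR; f_equal; ring.
Qed.

Lemma inf_shift (G : model) (e : edge G) v1 c1 s1 v2 c2 s2 x :
  entry_inf e x -> entry_inf e (fun t => tshift (hval v1 e c1 s1 t) (x t) (hval v2 e c2 s2 t)).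
Proof. by move=> Hf t Ht; rewrite Hf. Qed.

Lemma bundle_cohom (G : model) (HG : simple_model G) n (g g' : tdata G n) :
  cohom g g' -> bundle g -> bundle g'.
Proof.
move/cohomE=> [pi [c [s [_ Heq]]]] Hb e.
have [H1 [H2 H3]] := Hb e.
set p := pi (hd e); set q := pi (tl e).
have Hfin : forall i j, entry_fin e (g e (p i) (q j)) -> entry_fin e (g' e i j).
  move=> i j Hf; apply: fin_ext (fin_shift _ _ _ _ _ _ Hf) => t Ht.
  by rewrite Heq.
have Hinf : forall i j, entry_inf e (g e (p i) (q j)) -> entry_inf e (g' e i j).
  move=> i j Hf; apply: inf_ext (inf_shift (hd e) (c (hd e) i) (s (hd e) i e)
     (tl e) (c (tl e) j) (s (tl e) j e) Hf) => t Ht.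
  by rewrite Heq.
have Hfin' : forall i j, entry_fin e (g' e i j) -> entry_fin e (g e (p i) (q j)).
  move=> i j Hf; case: (H1 (p i) (q j)) => // /Hinf Hi.
  by case: (fin_inf_excl HG Hf Hi).
split; [|split].
- move=> i j; case: (H1 (p i) (q j)) => [/Hfin|/Hinf]; tauto.
- move=> i; have [j0 [Hj0 Hu]] := H2 (p i).
  exists (q^-1%g j0); split; first by apply: Hfin; rewrite permKV.
  by move=> j /Hfin' /Hu ->; rewrite permK.
- move=> j; have [i0 [Hi0 Hu]] := H3 (q j).
  exists (p^-1%g i0); split; first by apply: Hfin; rewrite permKV.
  by move=> i /Hfin' /Hu ->; rewrite permK.
Qed.


Definition liftf m k (p : {perm 'I_m}) (i : 'I_(m+k)) : 'I_(m+k) :=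
  unsplit (match split i with inl a => inl (p a) | inr b => inr b end).

Lemma liftf_inj m k p : injective (@liftf m k p).
Proof.
move=> i j /(can_inj unsplitK) E.
rewrite -(splitK i) -(splitK j); move: E.
case: (split i) => a; case: (split j) => b //= [] E.
- by rewrite (perm_inj E).
- by rewrite E.
Qed.

Definition liftp m k p := perm (@liftf_inj m k p).

Lemma cohom_dsum (G : model) m k (F F' : tdata G m) (H : tdata G k) :
  cohom F F' -> cohom (dsum F H) (dsum F' H).
Proof.
move/cohomE => [pi [c [s [Hh Heq]]]]; apply/cohomE.
exists (fun v => liftp k (pi v)),
  (fun v i => match split i with inl a => c v a | inr _ => 0 end),
  (fun v i e => match split i with inl a => s v a e | inr _ => 0%Z end); split.
  by move=> v i; case: (split i) => a; [apply: Hh | apply: harm0].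
move=> e i j t Ht; rewrite /act /liftp !permE /liftf /dsum.
case Ei: (split i) => [a|a]; case Ej: (split j) => [b|b]; rewrite !unsplitK //=.
- by rewrite Heq.
- by rewrite !hval00 tshift0.
Qed.


Lemma topright (G : model) (HG : simple_model G) m k (e : edge G) (A : tmat (m + k)) :
  trans_mx e A ->
  (forall i j : 'I_(m + k), (m <= i)%N -> (j < m)%N -> entry_inf e (A i j)) ->
  forall i j : 'I_(m + k), (i < m)%N -> (m <= j)%N -> entry_inf e (A i j).
Proof.
move=> [H1 [H2 H3]] Hbl i0 j0 Hi0 Hj0.
case: (H1 i0 j0) => // Hf; exfalso.
have Hc : forall j : 'I_m, exists i : 'I_m, entry_fin e (A (lshift k i) (lshift k j)).
  move=> j; have [r [Hr _]] := H3 (lshift k j).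
  have Hrm : (r < m)%N.
    rewrite ltnNge; apply/negP => Hle.
    exact: (fin_inf_excl HG Hr (Hbl r (lshift k j) Hle (ltn_ord j))).
  exists (Ordinal Hrm).
  by have -> : lshift k (Ordinal Hrm) = r by apply: val_inj.
pose f j := proj1_sig (constructive_indefinite_description _ (Hc j)).
have Hf' : forall j, entry_fin e (A (lshift k (f j)) (lshift k j)).
  by move=> j; exact: (proj2_sig (constructive_indefinite_description _ (Hc j))).
have finj : injective f.
  move=> j1 j2 E; have [c [_ Hu]] := H2 (lshift k (f j1)).
  have e1 := Hu _ (Hf' j1).
  have := Hf' j2; rewrite -E => /Hu e2.
  apply: val_inj; have := congr1 val (etrans (esym e1) e2); done.
have [g fK gK] := injF_bij finj.
have [c [_ Hu]] := H2 i0.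
have Ei : lshift k (f (g (Ordinal Hi0))) = i0 by rewrite gK; apply: val_inj.
have := Hf' (g (Ordinal Hi0)); rewrite Ei => /Hu e1.
have e2 := Hu _ Hf.
have := congr1 val (etrans (esym e2) e1) => /= Ej.
by move: Hj0; rewrite Ej leqNgt ltn_ord.
Qed.


Definition rotf m k (i : 'I_(m + k)) : 'I_(m + k) :=
  Ordinal (ltn_pmod (i + m) (leq_ltn_trans (leq0n i) (ltn_ord i))).

Lemma rot_val m k (i : 'I_(m + k)) :
  nat_of_ord (rotf i) = if (i < k)%N then (i + m)%N else (i - k)%N.
Proof.
rewrite /=; have := ltn_ord i; case: ifP => H Hi.
  by rewrite modn_small //; lia.
have -> : (i + m = (i - k) + (m + k))%N by lia.
by rewrite modnDr modn_small //; lia.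
Qed.

Lemma rotf_inj m k : injective (@rotf m k).
Proof.
move=> i j /(congr1 (@nat_of_ord _)); rewrite !rot_val => E; apply: val_inj => /=.
move: E; have := ltn_ord i; have := ltn_ord j.
case: ifP => Hi; case: ifP => Hj; lia.
Qed.

Definition rotp m k := perm (@rotf_inj m k).

Theorem proposition2p5 (G : model) (HG : simple_model G) (m k : nat)
    (E : tdata G (m + k)) (F : tdata G m) :
  bundle E -> bundle F -> subbundle F E ->
  exists H : tdata G k, bundle H /\ subbundle H E /\ cohom E (dsum F H).
Proof.
move=> HE _ [Hmk [F' [E' [HcF [HcE Hblk]]]]].
have HE' := bundle_cohom HG HcE HE.
have Hbl : forall e (i j : 'I_(m + k)), (m <= i)%N -> (j < m)%N -> entry_inf e (E' e i j).
  by move=> e i j Hi Hj t Ht; apply: (proj2 (Hblk e t Ht)).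
have Htr := fun e => topright HG (HE' e) (Hbl e).
pose H := fun e (i j : 'I_k) t => E' e (rshift m i) (rshift m j) t.
exists H; split; [|split].
- move=> e; have [H1 [H2 H3]] := HE' e; split; [|split].
  + by move=> i j; apply: H1.
  + move=> i; have [j0 [Hj0 Hu]] := H2 (rshift m i).
    have Hj0m : (m <= j0)%N.
      rewrite leqNgt; apply/negP => Hlt.
      exact: (fin_inf_excl HG Hj0 (Hbl e (rshift m i) j0 (leq_addr _ _) Hlt)).
    have Hlt : (j0 - m < k)%N by have := ltn_ord j0; lia.
    exists (Ordinal Hlt); split.
      by rewrite /H; have -> : rshift m (Ordinal Hlt) = j0 by apply: val_inj => /=; lia.
    move=> j /Hu Ej; apply: val_inj => /=; rewrite Ej /=; lia.
  + move=> j; have [i0 [Hi0 Hu]] := H3 (rshift m j).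
    have Hi0m : (m <= i0)%N.
      rewrite leqNgt; apply/negP => Hlt.
      exact: (fin_inf_excl HG Hi0 (Htr e i0 (rshift m j) Hlt (leq_addr _ _))).
    have Hlt : (i0 - m < k)%N by have := ltn_ord i0; lia.
    exists (Ordinal Hlt); split.
      by rewrite /H; have -> : rshift m (Ordinal Hlt) = i0 by apply: val_inj => /=; lia.
    move=> i /Hu Ei; apply: val_inj => /=; rewrite Ei /=; lia.
- split; first by apply: leq_addl.
  exists H, (fun e i j t => E' e (rotp m k i) (rotp m k j) t).
  split; first exact: cohom_refl.
  split; first exact: cohom_trans HcE (cohom_perm E' (rotp m k)).
  move=> e t Ht; split.
  + move=> i j i' j' Hi Hj; rewrite /H /rotp !permE.
    have -> : rotf i = rshift m i'.
      by apply: ord_inj; rewrite rot_val /= Hi ltn_ord; lia.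
    have -> : rotf j = rshift m j'.
      by apply: ord_inj; rewrite rot_val /= Hj ltn_ord; lia.
    by [].
  + move=> i j Hi Hj; rewrite /rotp !permE.
    apply: (Htr e (rotf i) (rotf j)) => //.
      have Hik : (i < k)%N = false by rewrite ltnNge Hi.
      rewrite rot_val Hik; have := ltn_ord i; lia.
    rewrite rot_val Hj; lia.
- have h1 : cohom E (dsum F' H).
    apply: cohom_ext HcE _ => e i j t Ht; rewrite /dsum.
    case: splitP => a Ha; case: splitP => b Hb.
    + exact: (proj1 (Hblk e t Ht) i j a b Ha Hb).
    + apply: (Htr e i j) => //; first by rewrite Ha ltn_ord.
      by rewrite Hb leq_addr.
    + apply: (Hbl e i j) => //; first by rewrite Ha leq_addr.
      by rewrite Hb ltn_ord.
    + rewrite /H; congr (E' e _ _ t); apply: val_inj => /=; lia.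
  exact: cohom_trans h1 (cohom_sym (cohom_dsum H HcF)).
Qed.
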